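(* Let $(Z_i)_{i\ge1}$ be i.i.d. non-constant real random variables. For each $n$ let $(a_{n,i})_{i\ge1}$ be real constants, and for $k\ge1$ let $M_{n,k}$ be the $k$-th largest of $(a_{n,i}+Z_i)_{i\ge1}$. If $M_{n,1}\to0$ in probability as $n\to\infty$, then for each $k\ge1$, $M_{n,k}\to0$ in probability as $n\to\infty$.
   Context: The $k$-th largest value (counted with multiplicity) is $M_{n,k}=\sup\{x\in\mathbb R:\#\{i:a_{n,i}+Z_i\ge x\}\ge k\}\in[-\infty,\infty]$. *)

(* Defs.v *)
From HB Require Import structures.
From mathcomp Require Import all_boot all_order all_algebra.
From mathcomp Require Import all_classical all_reals all_analysis.
Set Implicit Arguments. Unset Strict Implicit. Unset Printing Implicit Defensive.
Import Order.TTheory GRing.Theory Num.Theory.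
Local Open Scope classical_set_scope.
Local Open Scope ring_scope.

Definition mutually_independent d (T : measurableType d) (R : realType)
    (P : probability T R) (Z : nat -> {RV P >-> R}) : Prop :=
  forall (I : seq nat), uniq I ->
  forall (B : nat -> set R), (forall i, measurable (B i)) ->
  P (\bigcap_(i in [set` I]) (Z i @^-1` B i)) =
  (\prod_(i <- I) P (Z i @^-1` B i))%E.

Definition identically_distributed d (T : measurableType d) (R : realType)
    (P : probability T R) (Z : nat -> {RV P >-> R}) : Prop :=
  forall i (B : set R), measurable B -> P (Z i @^-1` B) = P (Z 0%N @^-1` B).

Definition iid d (T : measurableType d) (R : realType)
    (P : probability T R) (Z : nat -> {RV P >-> R}) : Prop :=
  mutually_independent Z /\ identically_distributed Z.

Definition nonconstant_rv d (T : measurableType d) (R : realType)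
    (P : probability T R) (X : {RV P >-> R}) : Prop :=
  ~ (exists c : R, P (X @^-1` [set c]) = 1%E).

(* k-th largest value (with multiplicity) of (a n i + Z i w)_i :
   sup { x | #{ i | a n i + Z i w >= x } >= k } in the extended reals. *)
Definition kth_largest d (T : measurableType d) (R : realType)
    (P : probability T R) (a : nat -> nat -> R) (Z : nat -> {RV P >-> R})
    (n k : nat) (w : T) : \bar R :=
  ereal_sup [set x%:E | x in
    [set x : R | exists s : seq nat,
       [/\ uniq s, size s = k & forall i, i \in s -> x <= a n i + Z i w]]].

Definition cvg_in_prob0 d (T : measurableType d) (R : realType)
    (P : probability T R) (X : nat -> T -> \bar R) : Prop :=
  forall e : R, 0 < e ->
    P [set w | (e%:E < `| X n w |)%E] @[n --> \oo] --> 0%E.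

(* Main.v *)
Require Import Defs.
From HB Require Import structures.
From mathcomp Require Import all_boot all_order all_algebra.
From mathcomp Require Import all_classical all_reals all_analysis.
From mathcomp Require Import measurable_realfun.
From mathcomp Require Import lra.
Set Implicit Arguments. Unset Strict Implicit. Unset Printing Implicit Defensive.
Import Order.TTheory GRing.Theory Num.Theory.
Local Open Scope classical_set_scope.
Local Open Scope ring_scope.
Section G.
Context d (T : measurableType d) (R : realType) (P : probability T R).

Lemma lemP (A B : set T) : measurable A -> measurable B -> A `<=` B -> (P A <= P B)%E.
Proof. by move=> mA mB AB; apply: le_measure; rewrite ?inE. Qed.

Lemma null_union (F : nat -> set T) : (forall m, measurable (F m)) ->
  (forall m, P (F m) = 0%E) -> P (\bigcup_m F m) = 0%E.
Proof.
move=> mF F0; have := (negligibleP P (bigcupT_measurable _ mF)).1; apply.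
apply: negligible_bigcup => m. move: (F0 m). exact: (negligibleP P (mF m)).2.
Qed.

Lemma small_inv (x : R) : 0 < x -> exists m : nat, (m.+1%:R)^-1 < x.
Proof.
move=> x0; have xi : 0 < x^-1 by rewrite invr_gt0.
have h := archi_boundP (ltW xi).
exists (Num.Def.archi_bound x^-1); rewrite invf_plt ?posrE //.
apply: lt_le_trans h _; by rewrite ler_nat.
Qed.

Lemma mX_le (X : {RV P >-> R}) u : measurable [set w | (X w <= u)%R].
Proof.
have -> : [set w | (X w <= u)%R] = X @^-1` `]-oo, u] by apply/seteqP; split => w /=; rewrite in_itv.
rewrite -[X in measurable X]setTI; exact: measurable_funP.
Qed.

Lemma mX_gt (X : {RV P >-> R}) v : measurable [set w | (v < X w)%R].
Proof.
have -> : [set w | (v < X w)%R] = X @^-1` `]v, +oo[ by apply/seteqP; split => w /=; rewrite in_itv /= andbT.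
rewrite -[X in measurable X]setTI; exact: measurable_funP.
Qed.

Lemma setT_null (F : nat -> set T) : (forall m, measurable (F m)) ->
  (forall m, P (F m) = 0%E) -> (forall w, exists m, F m w) -> False.
Proof.
move=> mF F0 cov; have := null_union mF F0.
have -> : \bigcup_m F m = setT by apply/seteqP; split => // w _; have [m ?] := cov w; exists m.
by rewrite probability_setT => /eqP; rewrite onee_eq0.
Qed.

Lemma gap (X : {RV P >-> R}) : nonconstant_rv X -> exists u v : R,
  [/\ u < v, (0 < P [set w | (X w <= u)%R])%E & (0 < P [set w | (v < X w)%R])%E].
Proof.
move=> NC; apply: contrapT => NG.
have H : forall u v, u < v -> P [set w | (X w <= u)%R] = 0%E \/ P [set w | (v < X w)%R] = 0%E.
  move=> u v uv; have := measure_ge0 P [set w | (X w <= u)%R].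
  have := measure_ge0 P [set w | (v < X w)%R].
  rewrite !le_eqVlt => /orP [/eqP <-|h2]; first by right.
  move=> /orP [/eqP <-|h1]; first by left.
  by exfalso; apply: NG; exists u, v.
have [u0 Hu0] : exists u0, P [set w | (X w <= u0)%R] != 0%E.
  apply: contrapT => nA.
  apply: (@setT_null (fun m : nat => [set w | (X w <= m%:R)%R])).
  - by move=> m; exact: mX_le.
  - move=> m; case: (eqVneq (P [set w | (X w <= m%:R)%R]) 0%E) => // hm.
    by exfalso; apply: nA; exists m%:R.
  - move=> w; exists (Num.Def.archi_bound `|X w|) => /=.
    exact: ltW (le_lt_trans (ler_norm _) (archi_boundP (normr_ge0 _))).
have [u1 Hu1] : exists u1, P [set w | (X w <= u1)%R] = 0%E.
  apply: contrapT => nA.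
  apply: (@setT_null (fun m : nat => [set w | (- m%:R < X w)%R])).
  - by move=> m; exact: mX_gt.
  - move=> m; have hlt : - m%:R - 1 < - m%:R :> R by rewrite ltrBlDr ltrDl.
    have [h|//] := H _ _ hlt.
    by exfalso; apply: nA; exists (- m%:R - 1).
  - move=> w; exists (Num.Def.archi_bound `|X w|) => /=.
    rewrite ltrNl; apply: le_lt_trans (archi_boundP (normr_ge0 _)).
    by rewrite -normrN ler_norm.
pose S := [set u | P [set w | (X w <= u)%R] = 0%E].
have hS : has_sup S.
  split; first by exists u1.
  exists u0 => u Su; rewrite leNgt; apply/negP => u0u.
  move: Hu0; rewrite eq_le measure_ge0 andbT -Su.
  by apply/negP/negPn/lemP; [exact: mX_le|exact: mX_le|move=> w /= h; exact: le_trans h (ltW u0u)].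
pose c := sup S.
have N1 : P (\bigcup_m [set w | (X w <= c - (m.+1%:R)^-1)%R]) = 0%E.
  apply: null_union => m; first exact: mX_le.
  have em : 0 < (m.+1%:R : R)^-1 by rewrite invr_gt0 ltr0Sn.
  have [s Ss hs] := sup_adherent em hS.
  apply/eqP; rewrite eq_le measure_ge0 andbT -Ss.
  by apply: lemP; [exact: mX_le|exact: mX_le|move=> w /= h; exact: le_trans h (ltW hs)].
have N2 : P (\bigcup_m [set w | (c + (m.+1%:R)^-1 < X w)%R]) = 0%E.
  apply: null_union => m; first exact: mX_gt.
  have uv : c + (m.+2%:R)^-1 < c + (m.+1%:R)^-1.
    by rewrite ltrD2l ltf_pV2 ?posrE ?ltr0Sn // ltr_nat.
  have [h|//] := H _ _ uv.
  have : c + (m.+2%:R)^-1 <= c by apply: sup_upper_bound.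
  by rewrite gerDl leNgt invr_gt0 ltr0Sn.
apply: NC; exists c.
have mA : measurable (X @^-1` [set c]).
  by rewrite -[X in measurable X]setTI; apply: measurable_funP => //; exact: measurable_set1.
have mU : measurable (\bigcup_m [set w | (X w <= c - (m.+1%:R)^-1)%R] `|`
    \bigcup_m [set w | (c + (m.+1%:R)^-1 < X w)%R]).
  by apply: measurableU; apply: bigcupT_measurable => m; [exact: mX_le|exact: mX_gt].
have hC : P (~` (X @^-1` [set c])) = 0%E.
  apply/eqP; rewrite eq_le measure_ge0 andbT.
  apply: le_trans (lemP _ mU _) _; first exact: measurableC.
    move=> w /= hw; have [lt|gt] : X w < c \/ c < X w.
      by move: hw; case: (ltgtP (X w) c) => //; [left|right].
    + have lt' : 0 < c - X w by rewrite subr_gt0.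
      have [m hm] := small_inv lt'.
      by left; exists m => //=; rewrite lerBrDr addrC -lerBrDr ltW.
    + have gt' : 0 < X w - c by rewrite subr_gt0.
      have [m hm] := small_inv gt'.
      by right; exists m => //=; rewrite -ltrBrDl.
  apply: le_trans (measureU2 _ _ _) _.
  - by apply: bigcupT_measurable => m; exact: mX_le.
  - by apply: bigcupT_measurable => m; exact: mX_gt.
  have h1 : (P (\bigcup_m [set w | (X w <= c - (m.+1%:R)^-1)%R]) <= 0)%E by rewrite N1.
  have h2 : (P (\bigcup_m [set w | (c + (m.+1%:R)^-1 < X w)%R]) <= 0)%E by rewrite N2.
  by apply: le_trans (leeD h1 h2) _; rewrite adde0.
apply/eqP; rewrite eq_le probability_le1 //=.
rewrite -(probability_setT P) -(setUv (X @^-1` [set c])).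
apply: le_trans (measureU2 _ _ _) _ => //; first exact: measurableC.
have h3 : (P (~` (X @^-1` [set c])) <= 0)%E by rewrite hC.
by apply: le_trans (leeD (lexx _) h3) _; rewrite adde0.
Qed.

End G.
Section B.
Context (R : realType).

Definition G (q : nat -> R) l r := \prod_(i <- iota l r) q i.

Lemma Gsplit q c r : G q 0 (c + r) = G q 0 c * G q c r.
Proof. by rewrite /G iotaD big_cat. Qed.

Lemma G1 q l : G q l 1 = q l.
Proof. by rewrite /G /= big_seq1. Qed.

Lemma G_ge0 q l r : (forall i, 0 <= q i) -> 0 <= G q l r.
Proof. by move=> h; apply: prodr_ge0 => i _. Qed.

Lemma G_le1 q l r : (forall i, 0 <= q i <= 1) -> G q l r <= 1.
Proof. by move=> h; apply: prodr_ile1 => i _. Qed.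

Lemma blocks_real (q : nat -> R) (b δ : R) (k m0 : nat) :
  0 < b -> (forall i, b <= q i <= 1) -> 0 < δ -> δ < 1 ->
  G q 0 m0 < (δ * b) ^+ k ->
  forall j, (j < k)%N -> forall c, (δ * b) ^+ j <= G q 0 c ->
  exists r, G q c r.+1 <= δ /\ (δ * b) ^+ j.+1 <= G q 0 (c + r.+1).
Proof.
move=> b0 hq d0 d1 hm0 j jk c hc.
have q01 : forall i, 0 <= q i <= 1.
  by move=> i; have /andP [h1 h2] := hq i; rewrite h2 andbT; exact: le_trans (ltW b0) h1.
have q0 : forall i, 0 <= q i by move=> i; have /andP [] := q01 i.
have b1 : b <= 1 by have /andP [h1 h2] := hq 0%N; exact: le_trans h1 h2.
have db0 : 0 <= δ * b by rewrite mulr_ge0 // ltW.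
have db1 : δ * b <= 1 by nra.
have Gc0 : 0 < G q 0 c by apply: lt_le_trans hc; rewrite exprn_gt0 // mulr_gt0.
have hj : (δ * b) ^+ j >= 0 by rewrite exprn_ge0.
have key : (δ * b) ^+ k <= δ * G q 0 c.
  apply: (@le_trans _ _ ((δ * b) ^+ j.+1)); first exact: ler_wiXn2l.
  rewrite exprS; set X := (δ * b) ^+ j in hc hj *.
  have e1 : b * X <= X by nra.
  have e2 : δ * (b * X) <= δ * X by nra.
  have e3 : δ * X <= δ * G q 0 c by nra.
  by rewrite -mulrA; exact: le_trans e2 e3.
have ex : exists r, G q 0 (c + r.+1) <= δ * G q 0 c.
  exists m0; apply: le_trans key; apply: ltW; apply: le_lt_trans hm0.
  rewrite -addSnnS addnC Gsplit; apply: ler_piMr; [exact: G_ge0|exact: G_le1].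
case: (ex_minnP ex) => r Hr Hmin.
have Hprev : δ * G q 0 c < G q 0 (c + r).
  case: r Hr Hmin => [|r'] Hr Hmin; first by rewrite addn0; nra.
  rewrite ltNge; apply/negP => h; have := Hmin _ h; by rewrite ltnn.
have step : G q 0 (c + r.+1) = G q 0 (c + r) * q (c + r).
  by rewrite -addn1 addnA Gsplit G1.
have Gcr0 : 0 <= G q 0 (c + r) by exact: G_ge0.
exists r; split.
  have : G q 0 c * G q c r.+1 <= G q 0 c * δ by rewrite -Gsplit mulrC.
  by rewrite ler_pM2l.
rewrite step exprS.
have /andP [hb _] := hq (c + r).
have h1 : δ * b * (δ * b) ^+ j <= b * (δ * G q 0 c) by nra.
have h2 : b * (δ * G q 0 c) <= b * G q 0 (c + r) by nra.
have h3 : b * G q 0 (c + r) <= G q 0 (c + r) * q (c + r) by nra.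
by apply: le_trans h1 (le_trans h2 h3).
Qed.

End B.
Section L.
Context d (T : measurableType d) (R : realType) (P : probability T R)
  (Z : nat -> {RV P >-> R}) (a : nat -> nat -> R).

Lemma Mk_ge n k w (y : R) (s : seq nat) : uniq s -> size s = k ->
  (forall i, i \in s -> y <= a n i + Z i w) -> (y%:E <= kth_largest a Z n k w)%E.
Proof. move=> us ss H; apply: ereal_sup_ubound; exists y => //; by exists s. Qed.

Lemma M1_le n w (y : R) : (forall i, a n i + Z i w <= y) ->
  (kth_largest a Z n 1 w <= y%:E)%E.
Proof.
move=> H; apply: ge_ereal_sup => _ [x [s [us ss Hs]] <-].
case: s us ss Hs => [|i [|]] //= _ _ Hs; rewrite lee_fin.
apply: le_trans (Hs i _) (H i); by rewrite inE.
Qed.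

Lemma Mk_le_M1 n k w : (0 < k)%N ->
  (kth_largest a Z n k w <= kth_largest a Z n 1 w)%E.
Proof.
move=> k0; apply: ereal_sup_le => _ [x [s [us ss Hs]] <-]; exists x => //.
case: s us ss Hs => [|i s] //= us ss Hs; first by rewrite -ss in k0.
exists [:: i]; split => // j; rewrite inE => /eqP ->; apply: Hs; by rewrite inE eqxx.
Qed.

Lemma exists_above (c : R) (s : seq nat) (f : nat -> R) :
  (forall i, i \in s -> c < f i) -> exists2 x, c < x & forall i, i \in s -> x <= f i.
Proof.
elim: s => [|j s IH] H; first by exists (c + 1) => //; rewrite ltrDl.
have [x cx Hx] : exists2 x, c < x & forall i, i \in s -> x <= f i.
  by apply: IH => i hi; apply: H; rewrite inE hi orbT.
exists (Order.min x (f j)); first by rewrite lt_min cx H // mem_head.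
move=> i; rewrite inE => /orP [/eqP ->|hi]; rewrite ge_min ?lexx ?orbT //.
by rewrite Hx.
Qed.

Lemma Mk_gtE n k w (c : R) : (c%:E < kth_largest a Z n k w)%E <->
  exists s : seq nat, [/\ uniq s, size s = k & forall i, i \in s -> c < a n i + Z i w].
Proof.
split.
  move=> /ereal_sup_gt [_ [x [s [us ss Hs]] <-]]; rewrite lte_fin => cx.
  exists s; split => // i hi; exact: lt_le_trans cx (Hs i hi).
move=> [s [us ss Hs]]; have [x cx Hx] := exists_above Hs.
by apply: lt_le_trans (Mk_ge us ss Hx); rewrite lte_fin.
Qed.

Lemma mZ_gt n i (c : R) : measurable [set w | c < a n i + Z i w].
Proof.
have -> : [set w | c < a n i + Z i w] = Z i @^-1` `]c - a n i, +oo[.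
  by apply/seteqP; split => w /=; rewrite in_itv /= andbT ltrBlDl.
rewrite -[X in measurable X]setTI; exact: measurable_funP.
Qed.

Lemma mseq_gt n (c : R) (s : seq nat) :
  measurable [set w | forall i, i \in s -> c < a n i + Z i w].
Proof.
elim: s => [|j s IH].
  by have -> : [set w | forall i, i \in [::] -> c < a n i + Z i w] = setT
    by apply/seteqP; split => w //= _ i; rewrite in_nil.
have -> : [set w | forall i, i \in j :: s -> c < a n i + Z i w] =
  [set w | c < a n j + Z j w] `&` [set w | forall i, i \in s -> c < a n i + Z i w].
  apply/seteqP; split => w /=.
    by move=> H; split; [apply: H; rewrite mem_head | move=> i hi; apply: H; rewrite inE hi orbT].
  by move=> [H1 H2] i; rewrite inE => /orP [/eqP ->|]; [|apply: H2].
exact: measurableI (mZ_gt _ _ _) IH.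
Qed.

Lemma mMk_gt n k (c : R) : measurable [set w | (c%:E < kth_largest a Z n k w)%E].
Proof.
pose F (m : nat) : set T := match unpickle m with
  | Some s => if uniq s && (size s == k) then
      [set w | forall i, i \in s -> c < a n i + Z i w] else set0
  | None => set0 end.
have -> : [set w | (c%:E < kth_largest a Z n k w)%E] = \bigcup_m F m.
  apply/seteqP; split => w /=.
    move=> /Mk_gtE [s [us ss Hs]]; exists (pickle s) => //.
    by rewrite /F pickleK us ss eqxx.
  move=> [m _]; rewrite /F; case: (unpickle m) => // s.
  case: ifP => // /andP [us /eqP ss] Hs; apply/Mk_gtE; by exists s.
apply: bigcupT_measurable => m; rewrite /F; case: (unpickle m) => // s.
case: ifP => // _; exact: mseq_gt.
Qed.

Lemma mMk n k : measurable_fun [set: T] (kth_largest a Z n k).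
Proof.
apply: (measurability _ (ErealGenOInfty.measurableE R)) => //.
move=> _ [_ [r ->] <-]; rewrite setTI preimage_itvoy; exact: mMk_gt.
Qed.

Lemma mMk_abs n k (e : R) : measurable [set w | (e%:E < `|kth_largest a Z n k w|)%E].
Proof.
have := emeasurable_fun_o_infty measurableT (measurableT_comp (@abse_measurable R setT) (mMk n k)) e%:E.
by rewrite setTI.
Qed.

Definition Bset n (η : R) i : set R := `]-oo, (- η - a n i)]%classic.
Definition L n η i := Z i @^-1` Bset n η i.

Lemma mL n η i : measurable (L n η i).
Proof. rewrite -[X in measurable X]setTI; exact: measurable_funP (measurable_itv _). Qed.

Lemma ev_lt (u : nat -> \bar R) (l : R) : u @ \oo --> l%:E ->
  forall x : R, l < x -> \forall m \near \oo, (u m < x%:E)%E.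
Proof.
move=> /fine_cvgP [hf hc] x x0.
have h2 := cvgr_lt l hc x x0.
near=> m.
have fm : u m \is a fin_num by near: m.
rewrite -(fineK fm) lte_fin; near: m; exact: h2.
Unshelve. all: end_near.
Qed.

Lemma lower_tail (indep : mutually_independent Z) n η (b δ : R) k :
  0 < b -> 0 < δ -> δ < 1 -> (forall i, (b%:E <= P (L n η i))%E) ->
  (P (\bigcap_i L n η i) < ((δ * b) ^+ k)%:E)%E ->
  exists U, [/\ measurable U, (P U <= (k%:R * δ)%:E)%E &
    forall w, ~ U w -> exists s, [/\ uniq s, size s = k &
      forall i, i \in s -> ~ L n η i w]].
Proof.
move=> b0 d0 d1 hb hcap.
pose q i := fine (P (L n η i)).
have PL : forall i, P (L n η i) = (q i)%:E.
  by move=> i; rewrite /q fineK // fin_num_measure //; exact: mL.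
have hq : forall i, b <= q i <= 1.
  move=> i; rewrite -!lee_fin -PL hb /=; exact: probability_le1 (mL _ _ _).
have Pblk : forall l r, P (\bigcap_(i in [set` iota l r]) L n η i) = (G q l r)%:E.
  move=> l r; rewrite /L (indep _ (iota_uniq l r) (Bset n η)); last first.
    by move=> i; exact: measurable_itv.
  rewrite /G -prodEFin; apply: eq_bigr => i _; exact: PL.
have mblk : forall l r, measurable (\bigcap_(i in [set` iota l r]) L n η i).
  by move=> l r; apply: bigcap_measurableType => i _; exact: mL.
have [m0 hm0] : exists m0, G q 0 m0 < (δ * b) ^+ k.
  pose F m := \bigcap_(i in [set` iota 0 m]) L n η i.
  have capF : \bigcap_m F m = \bigcap_i L n η i.
    apply/seteqP; split => w Hw.
      move=> i _; apply: (Hw i.+1) => //=. by rewrite -[_ :: _]/(iota 0 i.+1) mem_iota add0n ltnSn.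
    by move=> m _ i _; apply: Hw.
  have cv : P \o F @ \oo --> P (\bigcap_m F m).
    apply: nonincreasing_cvg_mu.
    - have h := Pblk 0%N 0%N; rewrite /F; move: h => /eqP; rewrite eq_le => /andP [h _].
      by apply: le_lt_trans h _; exact: ltry.
    - by move=> m; exact: mblk.
    - by apply: bigcapT_measurable => m; exact: mblk.
    - move=> p r pr; apply/subsetPset => w Hw i; rewrite /= mem_iota => hi.
      apply: Hw; rewrite /= mem_iota; move: hi pr; rewrite !add0n => /andP [_ h1] h2.
      by rewrite (leq_trans h1 h2).
  have fcap : P (\bigcap_m F m) \is a fin_num.
    by rewrite fin_num_measure //; apply: bigcapT_measurable => m; exact: mblk.
  rewrite -(fineK fcap) in cv.
  have hlt : fine (P (\bigcap_m F m)) < (δ * b) ^+ k.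
    by rewrite -lte_fin fineK // capF.
  have [N _ HN] := ev_lt cv hlt.
  have := HN N (leqnn N); rewrite /= /F Pblk lte_fin => h; by exists N.
have claim : forall j, (j <= k)%N -> exists c U, [/\ measurable U,
    (P U <= (j%:R * δ)%:E)%E, (δ * b) ^+ j <= G q 0 c &
    forall w, ~ U w -> exists s, [/\ uniq s, size s = j &
      forall i, i \in s -> (i < c)%N /\ ~ L n η i w]].
  elim => [_|j IH jk].
    exists 0%N, set0; split => //.
    - by rewrite measure0 mul0r.
    - by rewrite expr0 /G big_nil.
    - by move=> w _; exists [::].
  have [c [U [mU PU hc HU]]] := IH (ltnW jk).
  have [r [hr hG]] := blocks_real b0 hq d0 d1 hm0 jk hc.
  exists (c + r.+1)%N, (U `|` \bigcap_(i in [set` iota c r.+1]) L n η i); split.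
  - exact: measurableU mU (mblk _ _).
  - apply: le_trans (measureU2 _ mU (mblk c r.+1)) _.
    have h := Pblk c r.+1; move: h => /eqP; rewrite eq_le => /andP [h _].
    rewrite -natr1 mulrDl mul1r EFinD; apply: leeD => //.
    by apply: le_trans h _; rewrite lee_fin.
  - exact: hG.
  - move=> w /= nU'.
    have nU : ~ U w by move=> h; apply: nU'; left.
    have [s [us ss Hs]] := HU w nU.
    have [i hi nLi] : exists2 i, i \in iota c r.+1 & ~ L n η i w.
      apply: contrapT => nex; apply: nU'; right => i /= hi.
      by apply: contrapT => nL; apply: nex; exists i.
    move: hi; rewrite mem_iota => /andP [hci hir].
    exists (i :: s); split.
    + rewrite /= us andbT; apply/negP => his; have [h _] := Hs i his.
      by rewrite leqNgt h in hci.
    + by rewrite /= ss.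
    + move=> i'; rewrite inE => /orP [/eqP ->|hi']; first by split.
      have [h1 h2] := Hs i' hi'; split => //; apply: leq_trans h1 _; exact: leq_addr.
have [c [U [mU PU _ HU]]] := claim k (leqnn k).
exists U; split => // w nU; have [s [us ss Hs]] := HU w nU.
by exists s; split => // i hi; case: (Hs i hi).
Qed.
Lemma idd_gt (idd : identically_distributed Z) i v :
  P [set w | (v < Z i w)%R] = P [set w | (v < Z 0%N w)%R].
Proof.
have e j : [set w | (v < Z j w)%R] = Z j @^-1` `]v, +oo[.
  by apply/seteqP; split => w /=; rewrite in_itv /= andbT.
by rewrite !e; apply: idd; exact: measurable_itv.
Qed.

Lemma idd_le (idd : identically_distributed Z) i u :
  P [set w | (Z i w <= u)%R] = P [set w | (Z 0%N w <= u)%R].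
Proof.
have e j : [set w | (Z j w <= u)%R] = Z j @^-1` `]-oo, u].
  by apply/seteqP; split => w /=; rewrite in_itv.
by rewrite !e; apply: idd; exact: measurable_itv.
Qed.

Lemma main_sec : iid Z -> nonconstant_rv (Z 0%N) ->
  cvg_in_prob0 P (fun n => kth_largest a Z n 1) ->
  forall k : nat, (0 < k)%N -> cvg_in_prob0 P (fun n => kth_largest a Z n k).
Proof.
move=> [indep idd] NC H1 k k0 e e0.
have [u [v [uv hu hv]]] := gap NC.
have fb : P [set w | (Z 0%N w <= u)%R] \is a fin_num by rewrite fin_num_measure //; exact: mX_le.
have fg : P [set w | (v < Z 0%N w)%R] \is a fin_num by rewrite fin_num_measure //; exact: mX_gt.
set b := fine (P [set w | (Z 0%N w <= u)%R]).
set g := fine (P [set w | (v < Z 0%N w)%R]).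
have hbE : P [set w | (Z 0%N w <= u)%R] = b%:E by rewrite fineK.
have hgE : P [set w | (v < Z 0%N w)%R] = g%:E by rewrite fineK.
have b0 : 0 < b by rewrite -lte_fin -hbE.
have g0 : 0 < g by rewrite -lte_fin -hgE.
pose η := Order.min e ((v - u) / 2).
have η1 : η <= e by rewrite ge_min lexx.
have η2 : η <= (v - u) / 2 by rewrite ge_min lexx orbT.
have η0 : 0 < η by rewrite lt_min e0 /=; lra.
have η20 : 0 < η / 2 by lra.
have kr0 : 0 < k%:R :> R by rewrite ltr0n.
apply/fine_cvgP; split.
  apply: nearW => n; rewrite fin_num_measure //; exact: mMk_abs.
apply/cvgr0Pnorm_le => ε ε0.
pose δ := Order.min (1/2) (ε / (2 * k%:R)).
have δ1 : δ < 1 by rewrite gt_min; apply/orP; left; lra.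
have δ0 : 0 < δ by rewrite lt_min; apply/andP; split;
  [lra | apply: divr_gt0 => //; rewrite mulr_gt0].
have kδ : k%:R * δ <= ε / 2.
  have : δ <= ε / (2 * k%:R) by rewrite ge_min lexx orbT.
  rewrite invfM mulrA => h.
  have e2 : k%:R * (ε / 2 / k%:R) = ε / 2 by rewrite mulrC divfK ?gt_eqF.
  by rewrite -[X in _ <= X]e2 ler_pM2l.
have ε20 : 0 < ε / 2 by lra.
have dbk : 0 < (δ * b) ^+ k by rewrite exprn_gt0 // mulr_gt0.
have ev1 := ev_lt (H1 e e0) ε20.
have ev2 := ev_lt (H1 (η / 2) η20) g0.
have ev3 := ev_lt (H1 (η / 2) η20) dbk.
near=> n.
have h1 : (P [set w | (e%:E < `|kth_largest a Z n 1 w|)%E] < (ε / 2)%:E)%E by near: n.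
have h2 : (P [set w | ((η / 2)%:E < `|kth_largest a Z n 1 w|)%E] < g%:E)%E by near: n.
have h3 : (P [set w | ((η / 2)%:E < `|kth_largest a Z n 1 w|)%E] < ((δ * b) ^+ k)%:E)%E
  by near: n.
have st1 : forall i, a n i < η - v.
  move=> i; rewrite ltNge; apply/negP => hai.
  have sub : [set w | (v < Z i w)%R] `<=` [set w | ((η / 2)%:E < `|kth_largest a Z n 1 w|)%E].
    move=> w /= hvz.
    have : (η%:E < kth_largest a Z n 1 w)%E.
      apply/Mk_gtE; exists [:: i]; split => // j; rewrite inE => /eqP ->; lra.
    move=> h; apply: lt_le_trans (lee_abs _); apply: le_lt_trans h; rewrite lee_fin; lra.
  have := lemP P (mX_gt (Z i) v) (mMk_abs n 1 (η / 2)) sub.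
  rewrite idd_gt // hgE => h; have := lt_le_trans h2 h; by rewrite ltxx.
have st2 : forall i, (b%:E <= P (L n η i))%E.
  move=> i; rewrite -hbE -(idd_le idd i u).
  apply: (lemP P (mX_le (Z i) u) (mL n η i)) => w /= hz.
  rewrite /L /Bset /= in_itv /=; have := st1 i; lra.
have st3 : (P (\bigcap_i L n η i) < ((δ * b) ^+ k)%:E)%E.
  have sub3 : \bigcap_i L n η i `<=` [set w | ((η / 2)%:E < `|kth_largest a Z n 1 w|)%E].
    move=> w /= hw.
    have hM : (kth_largest a Z n 1 w <= (- η)%:E)%E.
      apply: M1_le => i; have := hw i I; rewrite /L /Bset /= in_itv /=; lra.
    rewrite -abseN; apply: lt_le_trans (lee_abs _).
    rewrite EFinN leeNr in hM; apply: lt_le_trans hM; rewrite lte_fin; lra.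
  apply: le_lt_trans h3; apply: (lemP P) sub3 => //.
    by apply: bigcapT_measurable => i; exact: mL.
  exact: mMk_abs.
have [U [mU PU HU]] := lower_tail indep b0 δ0 δ1 st2 st3.
have sub4 : [set w | (e%:E < `|kth_largest a Z n k w|)%E] `<=`
    [set w | (e%:E < `|kth_largest a Z n 1 w|)%E] `|` U.
  move=> w /= he; case: (pselect (U w)) => [|nU]; [by right|left].
  have [s [us ss Hs]] := HU w nU.
  have hMk : ((- η)%:E <= kth_largest a Z n k w)%E.
    apply: Mk_ge us ss _ => i hi; have := Hs i hi.
    rewrite /L /Bset /= in_itv /= => /negP; rewrite -ltNge => h; lra.
  have hk1 := Mk_le_M1 n w k0.
  case: (leP 0%E (kth_largest a Z n k w)) => M0.
    rewrite gee0_abs in he => //; rewrite gee0_abs; last exact: le_trans M0 hk1.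
    exact: lt_le_trans he hk1.
  rewrite lte0_abs in he => //.
  rewrite EFinN leeNl in hMk.
  have := lt_le_trans he hMk; rewrite lte_fin => h.
  by have := lt_le_trans h η1; rewrite ltxx.
have fin : P [set w | (e%:E < `|kth_largest a Z n k w|)%E] \is a fin_num.
  by rewrite fin_num_measure //; exact: mMk_abs.
rewrite /= ger0_norm ?fine_ge0 ?measure_ge0 // -lee_fin fineK //.
apply: le_trans (lemP P (mMk_abs n k e) (measurableU _ _ (mMk_abs n 1 e) mU) sub4) _.
apply: le_trans (measureU2 _ (mMk_abs n 1 e) mU) _.
rewrite [in X in (_ <= X)%E](splitr ε).
rewrite EFinD; apply: leeD; first exact: ltW.
by apply: le_trans PU _; rewrite lee_fin.
Unshelve. all: end_near.
Qed.

End L.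

Theorem lemma51 (d : measure_display) (T : measurableType d) (R : realType)
    (P : probability T R) (Z : nat -> {RV P >-> R}) (a : nat -> nat -> R) :
  iid Z -> nonconstant_rv (Z 0%N) ->
  cvg_in_prob0 P (fun n => kth_largest a Z n 1) ->
  forall k : nat, (0 < k)%N -> cvg_in_prob0 P (fun n => kth_largest a Z n k).
Proof. exact: main_sec. Qed.
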